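(* Let $f:2^V\to\mathbb{R}$ be submodular, let $x^1,\dots,x^d\in[0,1]^n$ and $w_1,\dots,w_d\in\mathbb{R}$, and let $\mu=\sum_{j=1}^d w_j x^j$. If $\sigma_\mu$ is any permutation ordering $\mu$ (i.e. $\mu(\sigma_\mu(1))\ge\cdots\ge\mu(\sigma_\mu(n))$), then $$\sigma_\mu\in\arg\min_{\sigma}\ \sum_{j=1}^d w_j\, d_{\hat f}(x^j\|\sigma),$$ the minimum being over all permutations $\sigma$ of $V$. In particular (taking $w_j=1/d$), a permutation ordering the arithmetic mean $\frac1d\sum_j x^j$ minimizes $\sum_{j=1}^d d_{\hat f}(x^j\|\sigma)$; equivalently, the minimizing permutation is obtained by sorting the scores $\sum_{j} w_j x^j_i$, $i=1,\dots,n$, in decreasing order.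
   Context: Let $V=\{1,\dots,n\}$. A permutation $\sigma$ is a bijection $V\to V$, where $\sigma(i)$ is the element placed at rank $i$. Write $S^\sigma_0=\emptyset$, $S^\sigma_j=\{\sigma(1),\dots,\sigma(j)\}$. For $f:2^V\to\mathbb{R}$ define $h^f_\sigma\in\mathbb{R}^n$ by $h^f_\sigma(\sigma(j))=f(S^\sigma_j)-f(S^\sigma_{j-1})$. For $x\in\mathbb{R}^n$, $\sigma_x$ orders $x$ if $x(\sigma_x(1))\ge\cdots\ge x(\sigma_x(n))$; the Lovász extension is $\hat f(x)=\langle x,h^f_{\sigma_x}\rangle$ (independent of the choice of $\sigma_x$). $f$ is submodular if $f(S)+f(T)\ge f(S\cup T)+f(S\cap T)$ for all $S,T$. The LB divergence is $d_{\hat f}(x\|\sigma)=\hat f(x)-\langle x,h^f_\sigma\rangle$ for $x\in[0,1]^n$. *)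

(* Defs.v *)
(* V = {1..n} is represented by 'I_n = {0..n-1}; ranks are
   likewise 0-indexed: sigma : 'S_n maps rank i to an element of V. *)
From HB Require Import structures.
From mathcomp Require Import all_boot all_order all_fingroup all_algebra.
Set Implicit Arguments. Unset Strict Implicit. Unset Printing Implicit Defensive.
Import Order.TTheory GRing.Theory Num.Theory.
Local Open Scope ring_scope.

Definition prefix_set (n : nat) (s : 'S_n) (j : nat) : {set 'I_n} :=
  [set s i | i : 'I_n & (i < j)%N].

(* h^f_sigma : h(sigma(j)) = f(S_j) - f(S_{j-1}) (1-indexed ranks);
   for v = sigma(k) with 0-indexed rank k = sigma^-1 v, this is
   f(S_{k+1}) - f(S_k). *)
Definition hvec (R : numDomainType) (n : nat) (f : {set 'I_n} -> R)
    (s : 'S_n) (v : 'I_n) : R :=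
  f (prefix_set s ((s^-1)%g v).+1) - f (prefix_set s ((s^-1)%g v)).

Definition inner (R : numDomainType) (n : nat) (x y : 'I_n -> R) : R :=
  \sum_(i < n) x i * y i.

Definition orders (R : numDomainType) (n : nat) (x : 'I_n -> R) (s : 'S_n) : bool :=
  [forall i : 'I_n, forall j : 'I_n, (i <= j)%N ==> (x (s j) <= x (s i))].

Definition submodular (R : numDomainType) (n : nat) (f : {set 'I_n} -> R) : Prop :=
  forall S T : {set 'I_n}, f (S :|: T) + f (S :&: T) <= f S + f T.

(* Lovasz extension: <x, h^f_{sigma_x}> for some permutation sigma_x ordering x
   (the choice is irrelevant; a default is used only if none existed). *)
Definition lovasz (R : numDomainType) (n : nat) (f : {set 'I_n} -> R)
    (x : 'I_n -> R) : R :=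
  inner x (hvec f (odflt 1%g [pick s : 'S_n | orders x s])).

Definition lb_div (R : numDomainType) (n : nat) (f : {set 'I_n} -> R)
    (x : 'I_n -> R) (s : 'S_n) : R :=
  lovasz f x - inner x (hvec f s).

(* Main.v *)
Require Import Defs.
From HB Require Import structures.
From mathcomp Require Import all_boot all_order all_fingroup all_algebra.
Import Order.TTheory GRing.Theory Num.Theory.
Local Open Scope ring_scope.
Set Warnings "-notation-overridden -ambiguous-paths".

Section Aux.
Variable R : realFieldType.
Variable n : nat.

Lemma mem_prefix (s : 'S_n) j v : (v \in prefix_set s j) = ((s^-1)%g v < j)%N.
Proof.
apply/imsetP/idP => [[i]|hv].
  by rewrite inE => hi ->; rewrite permK.
by exists ((s^-1)%g v); rewrite ?inE // permKV.
Qed.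

Lemma prefix0 (s : 'S_n) : prefix_set s 0 = set0.
Proof. by apply/setP => v; rewrite mem_prefix inE. Qed.

Lemma prefixn (s : 'S_n) : prefix_set s n = setT.
Proof. by apply/setP => v; rewrite mem_prefix inE ltn_ord. Qed.

Lemma tele (G : nat -> R) (s : 'S_n) :
  \sum_(v : 'I_n) (G ((s^-1)%g v).+1 - G ((s^-1)%g v)) = G n - G 0%N.
Proof.
rewrite (reindex_inj (@perm_inj _ s)) /=.
under eq_bigr do rewrite permK.
by rewrite -(big_mkord xpredT (fun k => G k.+1 - G k)) telescope_sumr.
Qed.

Lemma sumA (f : {set 'I_n} -> R) (s : 'S_n) (T : {set 'I_n}) :
  submodular f -> \sum_(v in T) hvec f s v <= f T - f set0.
Proof.
move=> sf.
pose G j := f (T :&: prefix_set s j).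
have -> : f T - f set0 = G n - G 0%N by rewrite /G prefixn prefix0 setIT setI0.
rewrite -(tele G s) big_mkcond /=; apply: ler_sum => v _.
set r := (s^-1)%g v.
have eqS : forall u, (u \in prefix_set s r.+1) = (u \in prefix_set s r) || (u == v).
  move=> u; rewrite !mem_prefix ltnS leq_eqVlt orbC; congr (_ || _).
  by rewrite (inj_eq (@ord_inj n)) (inj_eq (@perm_inj _ _)).
case: ifP => vT.
  rewrite /hvec -/r /G lerBrDr addrC addrA lerBlDr.
  have := sf (prefix_set s r) (T :&: prefix_set s r.+1).
  have -> : prefix_set s r :|: (T :&: prefix_set s r.+1) = prefix_set s r.+1.
    apply/setP => u; rewrite !inE !eqS; case: (u \in prefix_set s r) => //=.
    by case: (u =P v) => [->|]; rewrite ?vT ?andbF.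
  have -> : prefix_set s r :&: (T :&: prefix_set s r.+1) = T :&: prefix_set s r.
    apply/setP => u; rewrite !inE !eqS; by case: (u \in prefix_set s r); rewrite ?andbF ?andbT.
  by move=> h; rewrite addrC [X in _ <= X]addrC.
have -> : G r.+1 = G r.
  rewrite /G; congr f; apply/setP => u; rewrite !inE eqS.
  by case: eqP => [->|]; rewrite ?vT ?orbF.
by rewrite subrr.
Qed.

Lemma sumB (f : {set 'I_n} -> R) (s : 'S_n) j : (j <= n)%N ->
  \sum_(v in prefix_set s j) hvec f s v = f (prefix_set s j) - f set0.
Proof.
move=> jn.
pose H i := f (prefix_set s (minn i j)).
have -> : f (prefix_set s j) - f set0 = H n - H 0%N.
  by rewrite /H min0n prefix0 (minn_idPr jn).
rewrite -(tele H s) big_mkcond /=; apply: eq_bigr => v _.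
rewrite mem_prefix /hvec /H.
case: ltnP => h.
  by rewrite (minn_idPl h).
by rewrite (minn_idPr (leqW h)) subrr.
Qed.

End Aux.

Section Abel.
Variable R : realFieldType.
Variable n : nat.
Variable mu : 'I_n.+1 -> R.
Variable smu : 'S_n.+1.

Definition g k : R := if (k < n.+1)%N then mu (smu (inord k)) else 0.
Definition c k : R := g k - g k.+1.

Lemma abel (y : 'I_n.+1 -> R) :
  inner mu y = \sum_(k < n.+1) c k * \sum_(v in prefix_set smu k.+1) y v.
Proof.
under eq_bigr do rewrite mulr_sumr big_mkcond.
rewrite exchange_big /inner; apply: eq_bigr => v _ /=.
rewrite -big_mkcond /= -mulr_suml; congr (_ * _).
under eq_bigl do rewrite mem_prefix ltnS.
rewrite (eq_bigl (fun i : 'I_n.+1 => xpredT i && ((smu^-1)%g v <= i)%N)) //.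
rewrite -(@big_geq_mkord _ _ _ _ _ xpredT c) /=.
under eq_bigr do rewrite /c -opprB.
rewrite sumrN telescope_sumr; last exact: ltnW.
rewrite opprB /g ltnn subr0 ltn_ord inord_val permKV //.
Qed.

Lemma ineq (f : {set 'I_n.+1} -> R) (s : 'S_n.+1) :
  submodular f -> orders mu smu -> inner mu (hvec f s) <= inner mu (hvec f smu).
Proof.
move=> sf /forallP ord.
rewrite !abel; apply: ler_sum => k _.
have eqT : forall t : 'S_n.+1, \sum_(v in setT) hvec f t v = f setT - f set0.
  by move=> t; rewrite -(@prefixn n.+1 t) sumB // prefixn.
case: (ltnP k n) => hk.
  rewrite sumB //; apply: ler_wpM2l; last exact: sumA.
  rewrite /c /g ltn_ord ltnS hk subr_ge0.
  have := forallP (ord (inord k)) (inord k.+1).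
  by rewrite !inordK ?leqnSn //= ltnS ?ltnW.
have -> : k.+1 = n.+1 by apply/eqP; rewrite eqSS eqn_leq hk -ltnS ltn_ord.
by rewrite !prefixn !eqT.
Qed.

End Abel.

Theorem mainTheorem13 (R : realFieldType) (n d : nat)
    (f : {set 'I_n} -> R) (x : 'I_d -> 'I_n -> R) (w : 'I_d -> R) :
  submodular f ->
  (forall j i, 0 <= x j i <= 1) ->
  forall smu : 'S_n,
    orders (fun i => \sum_(j < d) w j * x j i) smu ->
    forall s : 'S_n,
      \sum_(j < d) w j * lb_div f (x j) smu <= \sum_(j < d) w j * lb_div f (x j) s.
Proof.
move=> sf _ smu hord s.
set mu := (fun i => \sum_(j < d) w j * x j i).
have lin : forall t : 'S_n, \sum_(j < d) w j * lb_div f (x j) t =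
    \sum_(j < d) w j * lovasz f (x j) - inner mu (hvec f t).
  move=> t; rewrite /lb_div; under eq_bigr do rewrite mulrBr.
  rewrite sumrB; congr (_ - _); rewrite /inner /mu.
  under eq_bigr do rewrite mulr_sumr.
  rewrite exchange_big; apply: eq_bigr => i _; rewrite mulr_suml.
  by apply: eq_bigr => j _; rewrite mulrA.
rewrite !lin lerD2l lerN2.
clear lin; move: hord; rewrite -/mu; clearbody mu.
case: n f x smu s sf mu => [|n] f x smu s sf mu hord.
  by rewrite /inner !big_ord0.
exact: ineq.
Qed.
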